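(* Let $\alpha\in\mathbb{Q}(i)\setminus\mathbb{R}$ with $|\alpha|>1$, with minimal primitive polynomial $P_\alpha(X)=a_2X^2+a_1X+a_0$ ($a_0,a_1,a_2\in\mathbb{Z}$ coprime, $a_2>0$, $P_\alpha(\alpha)=0$), and $\mathcal{D}=\{0,\ldots,|a_0|-1\}$, $\Lambda_\alpha=\mathbb{Z}[\alpha]\cap\alpha^{-1}\mathbb{Z}[\alpha^{-1}]$. Let $r=(\tfrac{a_2}{a_0},\tfrac{a_1}{a_0})$ and $\tau_r:\mathbb{Z}^2\to\mathbb{Z}^2$, $(z_0,z_1)\mapsto\left(z_1,-\left\lfloor \tfrac{a_2}{a_0}z_0+\tfrac{a_1}{a_0}z_1\right\rfloor\right)$. Let $\mathcal{V}_0=\{\pm(1,0),\pm(0,1)\}$, $\mathcal{V}_{j+1}=\mathcal{V}_j\cup\tau_r(\mathcal{V}_j)\cup(-\tau_r(-\mathcal{V}_j))$ for $j\ge0$, and $\mathcal{V}_r=\bigcup_{j\ge0}\mathcal{V}_j$. Let $\iota_\alpha:\mathbb{Q}^2\to\mathbb{Q}(i)$, $(z_0,z_1)\mapsto \operatorname{sgn}(a_0)\big(z_0a_2+z_1(a_2\alpha+a_1)\big)$, and $\mathcal{V}_\alpha=\iota_\alpha(\mathcal{V}_r)$. Then $\alpha$ has the finiteness property in $\Lambda_\alpha$ if and only if every $N\in\mathcal{V}_\alpha$ has an integer $\alpha$-expansion.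
   Context: For $x\in\Lambda_\alpha$ there is a unique $d\in\mathcal{D}$ with $(x-d)/\alpha\in\Lambda_\alpha$, and $T_\alpha(x)=(x-d)/\alpha$. An element $N\in\Lambda_\alpha$ has an integer $\alpha$-expansion if the orbit $N, T_\alpha(N), T_\alpha^2(N),\ldots$ reaches $0$; $\alpha$ has the finiteness property in $\Lambda_\alpha$ if every $N\in\Lambda_\alpha$ has an integer $\alpha$-expansion. *)

(* Defs.v *)
(* Complex numbers are modelled in algC (algebraic complex
   numbers), which contains Q(i). *)
From HB Require Import structures.
From mathcomp Require Import all_boot all_order all_algebra all_field.
Set Implicit Arguments. Unset Strict Implicit. Unset Printing Implicit Defensive.
Import Order.TTheory GRing.Theory Num.Theory.
Local Open Scope ring_scope.

Definition in_Qi (x : algC) : Prop :=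
  exists p q : rat, x = ratr p + 'i * ratr q.

Definition in_Zpoly (beta x : algC) : Prop :=
  exists p : {poly int}, x = (map_poly (fun z : int => z%:~R : algC) p).[beta].

Definition in_Lambda (alpha x : algC) : Prop :=
  in_Zpoly alpha x /\ exists y : algC, in_Zpoly alpha^-1 y /\ x = alpha^-1 * y.

Definition in_digits (a0 : int) (d : nat) : Prop := (d < `|a0|)%N.

Definition T_step (alpha : algC) (a0 : int) (x y : algC) : Prop :=
  in_Lambda alpha x /\
  exists d : nat,
    [/\ in_digits a0 d,
        in_Lambda alpha ((x - d%:R) / alpha),
        (forall d' : nat, in_digits a0 d' ->
           in_Lambda alpha ((x - d'%:R) / alpha) -> d' = d)
      & y = (x - d%:R) / alpha].

Definition has_int_expansion (alpha : algC) (a0 : int) (N : algC) : Prop :=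
  in_Lambda alpha N /\
  exists (n : nat) (s : nat -> algC),
    [/\ s 0%N = N,
        (forall k : nat, (k < n)%N -> T_step alpha a0 (s k) (s k.+1))
      & s n = 0].

Definition finiteness_property (alpha : algC) (a0 : int) : Prop :=
  forall N : algC, in_Lambda alpha N -> has_int_expansion alpha a0 N.

Definition tau_r (a0 a1 a2 : int) (z : int * int) : int * int :=
  (z.2, - Num.floor ((a2%:~R / a0%:~R : rat) * z.1%:~R
                     + (a1%:~R / a0%:~R : rat) * z.2%:~R)).

Definition negz2 (z : int * int) : int * int := (- z.1, - z.2).

Fixpoint in_Vj (a0 a1 a2 : int) (j : nat) (v : int * int) : Prop :=
  match j with
  | 0%N => v = (1, 0) \/ v = (-1, 0) \/ v = (0, 1) \/ v = (0, -1)
  | j'.+1 => [\/ in_Vj a0 a1 a2 j' v,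
                 (exists w, in_Vj a0 a1 a2 j' w /\ v = tau_r a0 a1 a2 w)
               | (exists w, in_Vj a0 a1 a2 j' w /\
                            v = negz2 (tau_r a0 a1 a2 (negz2 w)))]
  end.

Definition in_Vr (a0 a1 a2 : int) (v : int * int) : Prop :=
  exists j : nat, in_Vj a0 a1 a2 j v.

Definition iota_alpha (alpha : algC) (a0 a1 a2 : int) (z : int * int) : algC :=
  (Num.sg a0)%:~R * (z.1%:~R * a2%:~R + z.2%:~R * (a2%:~R * alpha + a1%:~R)).

(* Main.v *)
Require Import Defs.
From mathcomp Require Import all_boot all_order all_algebra all_field.
From mathcomp Require Import ring lra zify.
Import Order.TTheory GRing.Theory Num.Theory.
Local Open Scope ring_scope.
Lemma indep (alpha : algC) (u v : int) : alpha \notin Num.real ->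
  u%:~R + v%:~R * alpha = 0 -> u = 0 /\ v = 0.
Proof.
move=> nr h.
have v0 : v = 0.
  apply/eqP; apply: contraNT nr => nz.
  have nz' : (v%:~R : algC) != 0 by rewrite intr_eq0.
  have -> : alpha = - u%:~R / v%:~R.
    apply: (mulfI nz'). rewrite mulrCA divff // mulr1.
    by apply/eqP; rewrite -addr_eq0 addrC h.
  by rewrite rpredM ?rpredN ?rpredV ?rpred_int.
split=> //; move: h; rewrite v0 mul0r addr0 => /eqP; rewrite intr_eq0 => /eqP //.
Qed.
Definition add2 (x y : int * int) : int * int := (x.1 + y.1, x.2 + y.2).

Lemma floor_split (A B : rat) :
  Num.floor (A + B) = Num.floor A + Num.floor B \/
  Num.floor (A + B) = Num.floor A - Num.floor (- B).
Proof.
rewrite (floorNceil (- B)) opprK opprK ceil_floor.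
case: (boolP (B \is a Num.int)) => Bi /=.
  by left; rewrite floorDrz.
have hA := floor_itv A; have hB := floor_itv B.
rewrite !intrD in hA hB *.
have [hlt|hge] := ltP (A + B) ((Num.floor A)%:~R + (Num.floor B)%:~R + 1).
  left; apply: floor_def; rewrite !intrD; apply/andP; split=> //.
  case/andP: hA => h1 _; case/andP: hB => h2 _; lra.
right; rewrite addrA; apply: floor_def; rewrite !intrD; apply/andP; split=> //.
case/andP: hA => _ h1; case/andP: hB => _ h2; lra.
Qed.

Lemma tau_add (a0 a1 a2 : int) x y :
  tau_r a0 a1 a2 (add2 x y) = add2 (tau_r a0 a1 a2 x) (tau_r a0 a1 a2 y) \/
  tau_r a0 a1 a2 (add2 x y) = add2 (tau_r a0 a1 a2 x) (negz2 (tau_r a0 a1 a2 (negz2 y))).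
Proof.
case: x y => [x1 x2] [y1 y2]; rewrite /tau_r /add2 /negz2 /=.
set c2 := (a2%:~R / a0%:~R : rat); set c1 := (a1%:~R / a0%:~R : rat).
have -> : c2 * (x1 + y1)%:~R + c1 * (x2 + y2)%:~R =
   (c2 * x1%:~R + c1 * x2%:~R) + (c2 * y1%:~R + c1 * y2%:~R).
  by rewrite !intrD; ring.
have -> : c2 * (- y1)%:~R + c1 * (- y2)%:~R = - (c2 * y1%:~R + c1 * y2%:~R).
  by rewrite !intrN; ring.
case: (floor_split (c2 * x1%:~R + c1 * x2%:~R) (c2 * y1%:~R + c1 * y2%:~R)) => ->;
  first [by left; congr pair; ring | by right; congr pair; ring].
Qed.

Definition reach (a0 a1 a2 : int) (z : int * int) :=
  exists n, iter n (tau_r a0 a1 a2) z = (0, 0).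

Lemma Vr_tau a0 a1 a2 v : in_Vr a0 a1 a2 v -> in_Vr a0 a1 a2 (tau_r a0 a1 a2 v).
Proof. by case=> j hj; exists j.+1; apply: Or32; exists v. Qed.

Lemma Vr_sig a0 a1 a2 v : in_Vr a0 a1 a2 v ->
  in_Vr a0 a1 a2 (negz2 (tau_r a0 a1 a2 (negz2 v))).
Proof. by case=> j hj; exists j.+1; apply: Or33; exists v. Qed.

Lemma reach_add a0 a1 a2 :
  (forall w, in_Vr a0 a1 a2 w -> reach a0 a1 a2 w) ->
  forall n z, iter n (tau_r a0 a1 a2) z = (0, 0) ->
  forall v, in_Vr a0 a1 a2 v -> reach a0 a1 a2 (add2 z v).
Proof.
move=> hV; elim=> [|n IH] z hz v hv.
  move: hz => /= ->; rewrite /add2 /= !add0r; case: v hv => v1 v2 hv.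
  exact: hV.
rewrite iterSr in hz.
have [e|e] := tau_add a0 a1 a2 z v.
  have [m hm] := IH _ hz _ (Vr_tau _ _ _ _ hv).
  by exists m.+1; rewrite iterSr e.
have [m hm] := IH _ hz _ (Vr_sig _ _ _ _ hv).
by exists m.+1; rewrite iterSr e.
Qed.

Lemma iter_add2 n e z : iter n (add2^~ e) z = (z.1 + e.1 *+ n, z.2 + e.2 *+ n).
Proof.
elim: n => [|n IH] /=; first by rewrite !addr0; case: z.
by rewrite IH /add2 /= !mulrSr !addrA.
Qed.

Lemma reach_all a0 a1 a2 :
  (forall w, in_Vr a0 a1 a2 w -> reach a0 a1 a2 w) ->
  forall z, reach a0 a1 a2 z.
Proof.
move=> hV.
have step : forall e z, in_Vr a0 a1 a2 e -> reach a0 a1 a2 z ->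
    reach a0 a1 a2 (add2 z e).
  by move=> e z he [n hn]; apply: reach_add hn _ he.
have stepn : forall e z n, in_Vr a0 a1 a2 e -> reach a0 a1 a2 z ->
    reach a0 a1 a2 (iter n (add2^~ e) z).
  by move=> e z n he hz; elim: n => [|n IH] //=; apply: step.
have V1 : in_Vr a0 a1 a2 (1, 0) by exists 0%N; left.
have V2 : in_Vr a0 a1 a2 (-1, 0) by exists 0%N; right; left.
have V3 : in_Vr a0 a1 a2 (0, 1) by exists 0%N; right; right; left.
have V4 : in_Vr a0 a1 a2 (0, -1) by exists 0%N; right; right; right.
have r0 : reach a0 a1 a2 (0, 0) by exists 0%N.
have ra : forall a : int, reach a0 a1 a2 (a, 0).
  case=> n.
    by have := stepn _ _ n V1 r0; rewrite iter_add2 /= add0r mul0rn addr0 natz.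
  have := stepn _ _ n.+1 V2 r0; rewrite iter_add2 /= add0r mul0rn addr0.
  by rewrite mulNrn natz NegzE.
move=> [a b]; case: b => n.
  by have := stepn _ _ n V3 (ra a); rewrite iter_add2 /= mul0rn addr0 add0r natz.
have := stepn _ _ n.+1 V4 (ra a); rewrite iter_add2 /= mul0rn addr0 add0r.
by rewrite mulNrn natz NegzE.
Qed.

Lemma two_roots (alpha : algC) (G : {poly algC}) : alpha^* != alpha ->
  root G alpha -> root G alpha^* ->
  exists H, G = H * (('X - alpha%:P) * ('X - (alpha^*)%:P)).
Proof.
move=> ne /factor_theorem [G1 ->] r2.
have : root G1 alpha^*.
  by move: r2; rewrite /root hornerM hornerXsubC mulf_eq0 subr_eq0 (negPf ne) orbF.
case/factor_theorem=> G2 ->; exists G2; by rewrite -!mulrA [_ * ('X - _)]mulrC.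
Qed.

Lemma dvdC (alpha : algC) (PC FC : {poly algC}) : alpha \notin Num.real ->
  (size PC <= 3)%N -> PC != 0 -> root PC alpha -> root PC alpha^* ->
  root FC alpha -> root FC alpha^* -> PC %| FC.
Proof.
move=> nr sP nzP rP1 rP2 rF1 rF2.
have ne : alpha^* != alpha by rewrite -CrealE.
have [H EP] := two_roots _ _ ne rP1 rP2.
have [K EF] := two_roots _ _ ne rF1 rF2.
set Q := (('X - alpha%:P) * ('X - (alpha^*)%:P)) in EP EF.
have nzQ : Q != 0 by apply: mulf_neq0; rewrite polyXsubC_eq0.
have sQ : size Q = 3%N.
  by rewrite /Q size_mul ?polyXsubC_eq0 // !size_XsubC.
have nzH : H != 0 by apply: contraNneq nzP => H0; rewrite EP H0 mul0r.
have sH : (size H <= 1)%N.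
  by move: sP; rewrite EP size_mul // sQ addnS /= addn2.
have EH := size1_polyC sH.
have nzH0 : H`_0 != 0 by apply: contraNneq nzH => h0; rewrite EH h0.
rewrite EP EH mul_polyC dvdpZl // EF; exact: dvdp_mull (dvdpp _).
Qed.

Definition evC (x : algC) (p : {poly int}) :=
  (map_poly (fun z : int => z%:~R : algC) p).[x].

Lemma conj_ev x p : (evC x p)^* = evC x^* p.
Proof.
rewrite /evC -horner_map /=; congr (_.[_]).
rewrite -map_poly_comp; apply: eq_map_poly => z /=.
exact: conj_Creal (rpred_int _ _).
Qed.

Lemma size_mapC p : size (map_poly (fun z : int => z%:~R : algC) p) = size p.
Proof. by apply: size_map_inj_poly; [exact: intr_inj | rewrite rmorph0]. Qed.

Lemma int_dvd (alpha : algC) (P F : {poly int}) : alpha \notin Num.real ->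
  (size P <= 3)%N -> P != 0 -> evC alpha P = 0 -> evC alpha F = 0 -> P %| F.
Proof.
move=> nr sP nzP eP eF.
rewrite -dvdp_rat_int -(dvdp_map (ratr : rat -> algC)) -!map_poly_comp.
rewrite !(eq_map_poly (fun z => ratr_int _ z)).
apply: (@dvdC alpha _ _ nr); rewrite ?size_mapC //.
- by rewrite -size_poly_eq0 size_mapC size_poly_eq0.
- by rewrite /root; apply/eqP.
- by rewrite /root -[_.[_]]/(evC _ _) -conj_ev eP conjC0.
- by rewrite /root; apply/eqP.
- by rewrite /root -[_.[_]]/(evC _ _) -conj_ev eF conjC0.
Qed.

Lemma prim_dvd (P F : {poly int}) :
  (forall d : int, (forall i, (d %| P`_i)%Z) -> (d %| 1)%Z) ->
  P %| F -> exists G, F = P * G.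
Proof.
move=> hd /dvdpP_int [r Er].
set c := zcontents P.
have cP : forall i, (c %| P`_i)%Z.
  have : (c %| zcontents P)%Z by exact: dvdzz.
  by rewrite dvdz_contents => /polyOverP.
have cc : c * c = 1.
  move: (hd c cP); rewrite dvdz1.
  by case: (c) => [[|[|n]]|[|n]].
exists (c *: r).
rewrite [X in X * _](zpolyEprim P) -/c -scalerAr scalerAl scalerA cc scale1r.
exact: Er.
Qed.
Definition Pint (a0 a1 a2 : int) : {poly int} := a0%:P + a1%:P * 'X + a2%:P * 'X^2.

Lemma coefPint a0 a1 a2 i : (Pint a0 a1 a2)`_i = [:: a0; a1; a2]`_i.
Proof.
rewrite /Pint !coefD coefC !coefCM coefX coefXn.
by case: i => [|[|[|i]]] /=; rewrite ?mulr0 ?mulr1 ?addr0 ?add0r ?nth_nil.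
Qed.

Lemma extract (a0 a1 a2 : int) (m : nat) (p R G : {poly int}) :
  (size R <= m.+2)%N -> 'X^(m.+2) * p - R = Pint a0 a1 a2 * G ->
  exists g c : int, p = Pint a0 a1 a2 * (drop_poly 1 (drop_poly m.+1 G))
      + (c * a1)%:P + (c * a2)%:P * 'X + (a2 * g)%:P.
Proof.
move=> sR HG.
set Glo := take_poly m.+1 G; set Ghi := drop_poly m.+1 G.
set Ghh := drop_poly 1 Ghi; set c := Ghi`_0.
have EG : G = Glo + (c%:P + Ghh * 'X) * 'X^(m.+1).
  rewrite -(poly_take_drop m.+1 G) -/Glo -/Ghi; congr (_ + _ * _).
  rewrite -{1}(poly_take_drop 1 Ghi) expr1; congr (_ + _).
  rewrite (size1_polyC (size_take_poly 1 Ghi)) coef_take_poly //.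
set A := p - Pint a0 a1 a2 * Ghh - (c * a1)%:P - (c * a2)%:P * 'X.
set S := R + Pint a0 a1 a2 * Glo + (c * a0)%:P * 'X^(m.+1).
have eAS : 'X^(m.+2) * A = S.
  apply/eqP; rewrite -subr_eq0; apply/eqP.
  have -> : 'X^(m.+2) * A - S = ('X^(m.+2) * p - R) - Pint a0 a1 a2 * G.
    rewrite EG /A /S /Pint exprSr !polyCM.
    set Y := 'X^(m.+1). ring.
  by rewrite HG subrr.
have cS : forall j, S`_(j + m.+2) = if j == 0%N then a2 * G`_m else 0.
  move=> j.
  have -> : S = R + (a0%:P * Glo + a1%:P * ('X * Glo) + a2%:P * ('X^2 * Glo))
              + (c * a0)%:P * 'X^(m.+1).
    by rewrite /S /Pint; ring.
  rewrite !coefD !coefCM coefXM !coefXnM !coef_take_poly (nth_default _ (leq_trans sR _)); last by lia.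
  rewrite coefXn.
  case: j => [|j]; rewrite ?add0n /=; repeat (case: ifP => ?); try (exfalso; lia).
  all: rewrite ?mulr0 ?addr0 ?add0r ?mulr0.
    have -> : (m.+2 - 2)%N = m by lia.
    have -> : (m.+2 == m.+1) = false by lia.
    by rewrite mulr0 addr0.
  have -> : ((j.+1 + m.+2)%N == m.+1) = false by lia.
  by rewrite mulr0.
have EA : A = (a2 * G`_m)%:P.
  apply/polyP => j; rewrite coefC.
  have := congr1 (fun q : {poly int} => q`_(j + m.+2)) eAS => /=.
  rewrite coefXnM cS.
  have -> : (j + m.+2 < m.+2)%N = false by lia.
  by have -> : (j + m.+2 - m.+2)%N = j by lia.
exists G`_m, c.
rewrite -EA /A; ring.
Qed.

Lemma mapCE : (fun z : int => z%:~R : algC) = intr. Proof. by []. Qed.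

Lemma evCM x p q : evC x (p * q) = evC x p * evC x q.
Proof. by rewrite /evC mapCE rmorphM hornerM. Qed.
Lemma evCD x p q : evC x (p + q) = evC x p + evC x q.
Proof. by rewrite /evC mapCE rmorphD hornerD. Qed.
Lemma evCB x p q : evC x (p - q) = evC x p - evC x q.
Proof. by rewrite /evC mapCE rmorphB hornerD hornerN. Qed.
Lemma evCC x c : evC x c%:P = c%:~R.
Proof. by rewrite /evC mapCE map_polyC hornerC. Qed.
Lemma evCX x : evC x 'X = x.
Proof. by rewrite /evC mapCE map_polyX hornerX. Qed.
Lemma evCXn x n : evC x 'X^n = x ^+ n.
Proof. by rewrite /evC mapCE map_polyXn hornerXn. Qed.

Lemma evPint x a0 a1 a2 :
  evC x (Pint a0 a1 a2) = a2%:~R * x ^+ 2 + a1%:~R * x + a0%:~R.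
Proof. rewrite /Pint !evCD !evCM !evCC ?evCXn !evCX ?evCXn; ring. Qed.

Lemma Lambda_iota (alpha : algC) (a0 a1 a2 : int) (x : algC) :
  alpha \notin Num.real -> a2 != 0 -> gcdz (gcdz a0 a1) a2 = 1 ->
  a2%:~R * alpha ^+ 2 + a1%:~R * alpha + a0%:~R = 0 -> alpha != 0 ->
  in_Lambda alpha x ->
  exists g h : int, x = a2%:~R * g%:~R + h%:~R * (a2%:~R * alpha + a1%:~R).
Proof.
move=> nr a2nz gcd1 eq anz [[p Ep] [y [[q Eq] Ex]]].
set m := size q; set k := m.+2.
set R : {poly int} := \poly_(i < k) q`_(k.-1 - i).
have eR : evC alpha R = alpha ^+ k * x.
  rewrite /evC (horner_coef_wide (n:=k)) ?size_mapC ?size_poly //.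
  rewrite Ex Eq (horner_coef_wide (n:=k)) ?size_mapC; last by rewrite /k /m leqW ?leqW.
  rewrite mulr_sumr mulr_sumr (reindex_inj rev_ord_inj) /=; apply: eq_bigr => i _.
  rewrite !coef_map_id0 // coef_poly.
  have hi := ltn_ord i.
  have -> : (k - i.+1 < k)%N = true by lia.
  have -> : (k.-1 - (k - i.+1))%N = i by lia.
  have ek : alpha ^+ k = alpha ^+ (k - i.+1) * alpha ^+ i * alpha.
    by rewrite -mulrA -exprSr -exprD subnK.
  rewrite ek exprVn.
  have ai : alpha ^+ i != 0 by rewrite expf_neq0.
  field; by apply/andP.
set F : {poly int} := 'X^k * p - R.
have eF : evC alpha F = 0.
  have Ep2 : evC alpha p = x by rewrite Ep.
  by rewrite /F evCB evCM evCXn eR Ep2 subrr.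
have eP : evC alpha (Pint a0 a1 a2) = 0 by rewrite evPint.
have sP : (size (Pint a0 a1 a2) <= 3)%N.
  by apply/leq_sizeP => j hj; rewrite coefPint nth_default.
have nzP : Pint a0 a1 a2 != 0.
  apply/eqP => h; have := coefPint a0 a1 a2 2; rewrite h coef0 /= => h2.
  by move: a2nz; rewrite -h2 eqxx.
have dPF := int_dvd _ _ _ nr sP nzP eP eF.
have [G EG] : exists G, F = Pint a0 a1 a2 * G.
  apply: prim_dvd dPF => d hd; suff: (d %| gcdz (gcdz a0 a1) a2)%Z by rewrite gcd1.
  rewrite !dvdz_gcd.
  by have := hd 0%N; have := hd 1%N; have := hd 2%N; rewrite !coefPint /= => -> -> ->.
have [g [c Ep']] := extract _ _ _ _ _ _ _ (size_poly _ _) EG.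
exists g, c.
have Ep2 : evC alpha p = x by rewrite Ep.
rewrite -Ep2 Ep' !evCD !evCM !evCC evCX eP mul0r add0r !rmorphM /=.
ring.
Qed.

Lemma ss (a0 : int) : a0 != 0 -> (Num.sg a0)%:~R * (Num.sg a0)%:~R = 1 :> algC.
Proof. by move=> nz; rewrite -intrM -expr2 sqr_sg nz. Qed.

Lemma iota_Lambda (alpha : algC) (a0 a1 a2 : int) z :
  a2%:~R * alpha ^+ 2 + a1%:~R * alpha + a0%:~R = 0 -> alpha != 0 ->
  in_Lambda alpha (iota_alpha alpha a0 a1 a2 z).
Proof.
move=> eq anz; case: z => z1 z2; rewrite /iota_alpha /=.
have ea0 : (a0%:~R : algC) = - (a2%:~R * alpha ^+ 2 + a1%:~R * alpha).
  by apply/eqP; rewrite -addr_eq0 addrC eq.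
split.
  exists ((Num.sg a0 * (z1 * a2 + z2 * a1))%:P + (Num.sg a0 * z2 * a2)%:P * 'X).
  rewrite -/(evC _ _) evCD evCM !evCC evCX !intrM !intrD !intrM; ring.
exists (alpha * ((Num.sg a0)%:~R * (z1%:~R * a2%:~R + z2%:~R * (a2%:~R * alpha + a1%:~R)))).
split; last by rewrite mulKf.
exists ((Num.sg a0 * (- z1 * a1 - z2 * a0))%:P + (Num.sg a0 * (- z1 * a0))%:P * 'X).
rewrite -/(evC _ _) evCD evCM !evCC evCX !intrM !intrD !intrM !intrN !intrM ea0.
by field.
Qed.

Lemma to_iota (alpha : algC) (a0 a1 a2 : int) (x : algC) :
  alpha \notin Num.real -> a0 != 0 -> a2 != 0 -> gcdz (gcdz a0 a1) a2 = 1 ->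
  a2%:~R * alpha ^+ 2 + a1%:~R * alpha + a0%:~R = 0 -> alpha != 0 ->
  in_Lambda alpha x -> exists z, x = iota_alpha alpha a0 a1 a2 z.
Proof.
move=> nr a0nz a2nz g1 eq anz hx.
have [g [h ->]] := Lambda_iota _ _ _ _ _ nr a2nz g1 eq anz hx.
exists (Num.sg a0 * g, Num.sg a0 * h); rewrite /iota_alpha /= !intrM.
have := ss _ a0nz; set s := (Num.sg a0)%:~R => hs.
transitivity ((s * s) * (a2%:~R * g%:~R + h%:~R * (a2%:~R * alpha + a1%:~R))).
  by rewrite hs mul1r.
ring.
Qed.

Lemma iota_inj (alpha : algC) (a0 a1 a2 : int) z w :
  alpha \notin Num.real -> a0 != 0 -> a2 != 0 ->
  iota_alpha alpha a0 a1 a2 z = iota_alpha alpha a0 a1 a2 w -> z = w.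
Proof.
move=> nr a0nz a2nz; case: z w => [z1 z2] [w1 w2]; rewrite /iota_alpha /= => e.
have := @indep alpha (Num.sg a0 * ((z1 - w1) * a2 + (z2 - w2) * a1))
   (Num.sg a0 * (z2 - w2) * a2) nr.
case.
  move/eqP: e; rewrite -subr_eq0 => /eqP <-.
  rewrite !intrM !intrD ?intrB !intrM ?intrB ?intrN; ring.
have sgnz : Num.sg a0 != 0 by rewrite sgr_eq0.
move=> /eqP; rewrite mulf_eq0 (negPf sgnz) /= => /eqP h1 /eqP.
rewrite !mulf_eq0 (negPf sgnz) (negPf a2nz) /= orbF subr_eq0 => /eqP h2.
move: h1; rewrite h2 subrr mul0r addr0 => /eqP; rewrite mulf_eq0 (negPf a2nz) orbF.
by rewrite subr_eq0 => /eqP ->.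
Qed.

Lemma iota_step (alpha : algC) (a0 a1 a2 : int) z :
  a0 != 0 -> a2%:~R * alpha ^+ 2 + a1%:~R * alpha + a0%:~R = 0 ->
  exists d : nat, (d < `|a0|)%N /\
   iota_alpha alpha a0 a1 a2 z - d%:R = alpha * iota_alpha alpha a0 a1 a2 (tau_r a0 a1 a2 z).
Proof.
move=> a0nz eq; case: z => z1 z2.
set Q : rat := (a2%:~R / a0%:~R) * z1%:~R + (a1%:~R / a0%:~R) * z2%:~R.
have -> : tau_r a0 a1 a2 (z1, z2) = (z2, - Num.floor Q) by [].
set t := - Num.floor Q.
set D := Num.sg a0 * (a2 * z1 + a1 * z2 + a0 * t).
have a0nzQ : (a0%:~R : rat) != 0 by rewrite intr_eq0.
have hQ : ((a2 * z1 + a1 * z2)%:~R : rat) = a0%:~R * Q.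
  by rewrite /Q intrD !intrM; field.
have DQ : (D%:~R : rat) = `|a0|%:~R * (Q - (Num.floor Q)%:~R).
  rewrite /D intrM intrD hQ intrM /t intrN normrEsg intrM; ring.
have fl := floor_le Q; have fg := floorD1_gt Q.
rewrite intrD in fg.
have A0 : (0 : rat) < `|a0|%:~R by rewrite ltr0z normr_gt0.
have D0 : 0 <= D.
  by rewrite -(ler0z rat) DQ; apply: mulr_ge0; [exact: ltW | rewrite subr_ge0].
have D1 : D < `|a0|.
  rewrite -(ltr_int rat) DQ.
  have y1 : Q - (Num.floor Q)%:~R < 1 by rewrite ltrBlDl.
  have y0 : 0 <= Q - (Num.floor Q)%:~R by rewrite subr_ge0.
  nra.
exists `|D|%N; split; first lia.
rewrite pmulrn abszE ger0_norm //.
have ea0 : (a0%:~R : algC) = - (a2%:~R * alpha ^+ 2 + a1%:~R * alpha).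
  by apply/eqP; rewrite -addr_eq0 addrC eq.
rewrite /iota_alpha /D /= !intrM !intrD !intrM ea0; ring.
Qed.

Lemma iota0 (alpha : algC) (a0 a1 a2 : int) : iota_alpha alpha a0 a1 a2 (0, 0) = 0.
Proof. by rewrite /iota_alpha /= !mul0r add0r mulr0. Qed.

Lemma T_step_iota (alpha : algC) (a0 a1 a2 : int) z :
  alpha \notin Num.real -> a0 != 0 -> a2 != 0 -> gcdz (gcdz a0 a1) a2 = 1 ->
  a2%:~R * alpha ^+ 2 + a1%:~R * alpha + a0%:~R = 0 -> alpha != 0 ->
  T_step alpha a0 (iota_alpha alpha a0 a1 a2 z)
                  (iota_alpha alpha a0 a1 a2 (tau_r a0 a1 a2 z)) /\
  (forall y, T_step alpha a0 (iota_alpha alpha a0 a1 a2 z) y ->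
     y = iota_alpha alpha a0 a1 a2 (tau_r a0 a1 a2 z)).
Proof.
move=> nr a0nz a2nz g1 eq anz.
have [d [hd ed]] := iota_step alpha a0 a1 a2 z a0nz eq.
have hx : (iota_alpha alpha a0 a1 a2 z - d%:R) / alpha =
          iota_alpha alpha a0 a1 a2 (tau_r a0 a1 a2 z).
  by rewrite ed mulrC mulKf.
have ea0 : (a0%:~R : algC) = - (a2%:~R * alpha ^+ 2 + a1%:~R * alpha).
  by apply/eqP; rewrite -addr_eq0 addrC eq.
have uniq : forall d' : nat, in_digits a0 d' ->
    in_Lambda alpha ((iota_alpha alpha a0 a1 a2 z - d'%:R) / alpha) -> d' = d.
  move=> d' hd' hL.
  have [w Ew] := to_iota _ _ _ _ _ nr a0nz a2nz g1 eq anz hL.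
  have ed' : iota_alpha alpha a0 a1 a2 z - d'%:R = alpha * iota_alpha alpha a0 a1 a2 w.
    by rewrite -Ew mulrC divfK.
  move: ed ed'; set z' := tau_r a0 a1 a2 z; case: z' => t1 t2; case: w {Ew} => w1 w2.
  move=> ed ed'.
  have := @indep alpha (d%:Z - d'%:Z + Num.sg a0 * (w2 - t2) * a0)
                       (- (Num.sg a0 * (w1 - t1) * a2)) nr.
  case.
    have -> : (d%:Z - d'%:Z + Num.sg a0 * (w2 - t2) * a0)%:~R =
       ((iota_alpha alpha a0 a1 a2 z - d'%:R) - (iota_alpha alpha a0 a1 a2 z - d%:R))
        + ((Num.sg a0 * (w2 - t2) * a0)%:~R : algC).
      by rewrite !intrD !intrN -!pmulrn; ring.
    rewrite ed ed' /iota_alpha /= !intrN !intrM !intrB ea0; ring.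
  move=> h _; rewrite /in_digits in hd'.
  set e := Num.sg a0 * (w2 - t2) in h.
  have [e0|enz] := eqVneq e 0.
    by move: h; rewrite e0 mul0r addr0 => h; lia.
  have hge : `|a0| <= `|e * a0|.
    rewrite normrM ler_peMl // ?normr_ge0 //.
    by move: enz; rewrite -normr_gt0; case: `|e| => [[|n]|n].
  lia.
split; last first.
  move=> y [_ [d' [hd' hL' _ ->]]].
  by rewrite (uniq d' hd' hL') hx.
split; first exact: (iota_Lambda _ _ _ _ _ eq anz).
exists d; split => //.
- by rewrite hx; exact: (iota_Lambda _ _ _ _ _ eq anz).
Qed.


Lemma exp_reach (alpha : algC) (a0 a1 a2 : int) z :
  alpha \notin Num.real -> a0 != 0 -> a2 != 0 -> gcdz (gcdz a0 a1) a2 = 1 ->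
  a2%:~R * alpha ^+ 2 + a1%:~R * alpha + a0%:~R = 0 -> alpha != 0 ->
  has_int_expansion alpha a0 (iota_alpha alpha a0 a1 a2 z) -> reach a0 a1 a2 z.
Proof.
move=> nr a0nz a2nz g1 eq anz [_ [n [s [s0 steps sn]]]].
have key : forall k, (k <= n)%N -> s k = iota_alpha alpha a0 a1 a2 (iter k (tau_r a0 a1 a2) z).
  elim=> [|k IH] hk; first by rewrite s0.
  have hk' : (k < n)%N := hk.
  have st := steps k hk'.
  rewrite (IH (ltnW hk')) in st.
  have [_ hf] := T_step_iota alpha a0 a1 a2 (iter k (tau_r a0 a1 a2) z) nr a0nz a2nz g1 eq anz.
  rewrite (hf _ st) iterS; reflexivity.
exists n; apply: (iota_inj alpha a0 a1 a2 _ _ nr a0nz a2nz).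
by rewrite iota0 -sn (key n (leqnn n)).
Qed.
Lemma reach_exp (alpha : algC) (a0 a1 a2 : int) z :
  alpha \notin Num.real -> a0 != 0 -> a2 != 0 -> gcdz (gcdz a0 a1) a2 = 1 ->
  a2%:~R * alpha ^+ 2 + a1%:~R * alpha + a0%:~R = 0 -> alpha != 0 ->
  reach a0 a1 a2 z -> has_int_expansion alpha a0 (iota_alpha alpha a0 a1 a2 z).
Proof.
move=> nr a0nz a2nz g1 eq anz [n hn].
split; first exact: (iota_Lambda _ _ _ _ _ eq anz).
exists n, (fun k => iota_alpha alpha a0 a1 a2 (iter k (tau_r a0 a1 a2) z)).
split; first by [].
- move=> k _ /=.
  by have [st _] := T_step_iota alpha a0 a1 a2 (iter k (tau_r a0 a1 a2) z) nr a0nz a2nz g1 eq anz.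
- by rewrite /= hn iota0.
Qed.
Theorem mainTheorem5 (alpha : algC) (a0 a1 a2 : int) :
  in_Qi alpha -> alpha \notin Num.real -> 1 < `|alpha| ->
  0 < a2 -> gcdz (gcdz a0 a1) a2 = 1 ->
  a2%:~R * alpha ^+ 2 + a1%:~R * alpha + a0%:~R = 0 ->
  (finiteness_property alpha a0 <->
   forall v : int * int, in_Vr a0 a1 a2 v ->
     has_int_expansion alpha a0 (iota_alpha alpha a0 a1 a2 v)).
Proof.
move=> _ nr habs a2pos g1 eq.
have anz : alpha != 0.
  by apply: contraTneq habs => ->; rewrite normr0 ltr10.
have a2nz : a2 != 0 by rewrite gt_eqF.
have a0nz : a0 != 0.
  apply/eqP => a00; move: eq; rewrite a00 addr0.
  have -> : a2%:~R * alpha ^+ 2 + a1%:~R * alpha = alpha * (a1%:~R + a2%:~R * alpha).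
    by ring.
  move/eqP; rewrite mulf_eq0 (negPf anz) /= => /eqP h.
  have [_ a20] := indep _ _ _ nr h.
  by move: a2nz; rewrite a20 eqxx.
split.
  move=> fp v _; apply: fp; exact: (iota_Lambda _ _ _ _ _ eq anz).
move=> hV N hN.
have [z ->] := to_iota _ _ _ _ _ nr a0nz a2nz g1 eq anz hN.
apply: reach_exp => //.
apply: reach_all => w hw.
exact: (exp_reach _ _ _ _ _ nr a0nz a2nz g1 eq anz (hV w hw)).
Qed.
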